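(* Let $\mathcal{F}(\mathsf{REG},\mathsf{REG})$ be the class of all languages $L(\Phi)$ generated by F-systems $\Phi=(L_1,L_2)$ in which both the core language $L_1$ and the folding procedure language $L_2$ are regular. Then every language in $\mathcal{F}(\mathsf{REG},\mathsf{REG})$ is a linear (context-free) language, i.e., $\mathcal{F}(\mathsf{REG},\mathsf{REG})\subseteq \mathsf{LIN}$.
   Context: Let $\Sigma$ be a finite alphabet and $\Gamma=\{\mathtt{u},\mathtt{d}\}$. Define $f:\Sigma^*\times\Sigma\times\Gamma\to\Sigma^*$ by $f(x,a,\mathtt{u})=ax$ and $f(x,a,\mathtt{d})=xa$. The folding function $h:\Sigma^*\times\Gamma^*\to\Sigma^*$ is the partial function with $h(\varepsilon,\varepsilon)=\varepsilon$; if $|w|=|v|>0$ with $w=w'a$ ($a\in\Sigma$) and $v=v'b$ ($b\in\Gamma$), then $h(w,v)=f(h(w',v'),a,b)$; and $h(w,v)$ is undefined if $|w|\neq|v|$. An F-system is a pair $\Phi=(L_1,L_2)$ with $L_1\subseteq\Sigma^*$ and $L_2\subseteq\Gamma^*$; its language is $L(\Phi)=\{h(w,v)\mid w\in L_1, v\in L_2, |w|=|v|\}$. A linear grammar is a context-free grammar all of whose rules have the form $A\to uBv$ or $A\to u$ with $u,v$ terminal words and $A,B$ nonterminals; $\mathsf{LIN}$ is the class of languages generated by linear grammars, and $\mathsf{REG}$ the class of regular languages. *)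

(* Defs.v *)
From Stdlib Require List.
From mathcomp Require Import all_boot.
Set Implicit Arguments. Unset Strict Implicit. Unset Printing Implicit Defensive.

Definition language (A : Type) := seq A -> Prop.

Definition regular (A : Type) (L : language A) : Prop :=
  exists (Q : finType) (q0 : Q) (delta : Q -> A -> Q) (F : pred Q),
    forall w, L w <-> F (foldl delta q0 w).

Inductive gamma := gu | gd.

Definition ffold (S : Type) (x : seq S) (a : S) (b : gamma) : seq S :=
  match b with gu => a :: x | gd => rcons x a end.

(* The folding function h (partial): h(eps,eps)=eps,
   h(w'a, v'b) = f(h(w',v'), a, b), undefined when lengths differ. *)
Fixpoint hfold_rev (S : Type) (rw : seq S) (rv : seq gamma) : option (seq S) :=
  match rw, rv with
  | [::], [::] => Some [::]
  | a :: rw', b :: rv' =>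
      match hfold_rev rw' rv' with
      | Some x => Some (ffold x a b)
      | None => None
      end
  | _, _ => None
  end.

Definition hfold (S : Type) (w : seq S) (v : seq gamma) : option (seq S) :=
  hfold_rev (rev w) (rev v).

Definition F_lang (S : Type) (L1 : language S) (L2 : language gamma) : language S :=
  fun z => exists w v, L1 w /\ L2 v /\ size w = size v /\ hfold w v = Some z.

Inductive lin_rule (N S : Type) :=
  | RNonterm of N & seq S & N & seq S
  | RTerm of N & seq S.

Record lin_grammar (S : Type) := LinGrammar {
  nonterm : finType;
  start : nonterm;
  rules : seq (lin_rule nonterm S) }.

Inductive derives (S : Type) (G : lin_grammar S) : nonterm G -> seq S -> Prop :=
  | der_term A u : Stdlib.Lists.List.In (RTerm A u) (rules G) -> @derives S G A u
  | der_nonterm A u B v w : Stdlib.Lists.List.In (RNonterm A u B v) (rules G) ->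
      @derives S G B w -> @derives S G A (u ++ w ++ v).

Definition lin_lang (S : Type) (G : lin_grammar S) : language S :=
  fun w => @derives S G (start G) w.

Definition linear (S : Type) (L : language S) : Prop :=
  exists G : lin_grammar S, forall w, L w <-> lin_lang G w.

(* Main.v *)
Require Import Defs.
From mathcomp Require Import all_boot.
From Stdlib Require List.
Set Implicit Arguments. Unset Strict Implicit.

Lemma In_mem (T : eqType) (x : T) (s : seq T) : List.In x s <-> x \in s.
Proof.
elim: s => [|y s IH] //=; rewrite in_cons; split.
- by case=> [->|/IH ->]; rewrite ?eqxx ?orbT.
- by case/orP=> [/eqP->|/IH]; [left|right].
Qed.

Lemma In_enum (T : finType) (x : T) : List.In x (enum {: T}).
Proof. by apply/In_mem; rewrite mem_enum. Qed.

Definition grules (S Q1 Q2 : finType) (i1 : Q1) (d1 : Q1 -> S -> Q1) (F1 : pred Q1)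
  (i2 : Q2) (d2 : Q2 -> gamma -> Q2) (F2 : pred Q2) : list (lin_rule (option (Q1 * Q2)) S) :=
  RTerm (Some (i1, i2)) [::] ::
  (List.map (fun x : Q1 * Q2 => RNonterm None [::] (Some x) [::])
     (List.filter (fun x : Q1 * Q2 => F1 x.1 && F2 x.2) (enum {: Q1 * Q2}))
  ++ List.flat_map (fun x : Q1 * Q2 * S =>
       [:: RNonterm (Some (d1 x.1.1 x.2, d2 x.1.2 gu)) [:: x.2] (Some x.1) [::];
           RNonterm (Some (d1 x.1.1 x.2, d2 x.1.2 gd)) [::] (Some x.1) [:: x.2]])
     (enum {: Q1 * Q2 * S})).

Lemma in_grules (S Q1 Q2 : finType) (i1 : Q1) (d1 : Q1 -> S -> Q1) (F1 : pred Q1)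
  (i2 : Q2) (d2 : Q2 -> gamma -> Q2) (F2 : pred Q2) r :
  List.In r (grules i1 d1 F1 i2 d2 F2) <->
  r = RTerm (Some (i1, i2)) [::] \/
  (exists x : Q1 * Q2, F1 x.1 && F2 x.2 /\ r = RNonterm None [::] (Some x) [::]) \/
  (exists p q a, r = RNonterm (Some (d1 p a, d2 q gu)) [:: a] (Some (p, q)) [::]
     \/ r = RNonterm (Some (d1 p a, d2 q gd)) [::] (Some (p, q)) [:: a]).
Proof.
rewrite /grules /=; rewrite List.in_app_iff List.in_map_iff List.in_flat_map; split.
- case=> [<-|[[x [<- /List.filter_In [_ Hx]]]|[[[p q] a] [_ H]]]]; first by left.
  + by right; left; exists x.
  + right; right; exists p, q, a; case: H => [<-|[<-|[]]]; by [left|right].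
- case=> [->|[[x [Hx ->]]|[p [q [a H]]]]]; first by left.
  + by right; left; exists x; split=> //; apply/List.filter_In; split=> //; apply: In_enum.
  + right; right; exists (p, q, a); split; first by apply: In_enum.
    by case: H => ->; simpl; tauto.
Qed.

Lemma size_hfold (S : Type) rw rv (z : seq S) :
  hfold_rev rw rv = Some z -> size rw = size rv.
Proof.
elim: rw rv z => [|a rw IH] [|b rv] z //=.
case E: (hfold_rev rw rv) => [x|] // _; by rewrite (IH _ _ E).
Qed.

Definition sfold (A Q : Type) (d : Q -> A -> Q) (i : Q) (rw : seq A) := foldl d i (rev rw).

Lemma sfold_cons (A Q : Type) (d : Q -> A -> Q) i a rw :
  sfold d i (a :: rw) = d (sfold d i rw) a.
Proof. by rewrite /sfold rev_cons foldl_rcons. Qed.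

Definition mkG (S Q1 Q2 : finType) (i1 : Q1) (d1 : Q1 -> S -> Q1) (F1 : pred Q1)
  (i2 : Q2) (d2 : Q2 -> gamma -> Q2) (F2 : pred Q2) : lin_grammar S :=
  @LinGrammar S (option (Q1 * Q2))%type None (grules i1 d1 F1 i2 d2 F2).

Lemma der_sound (S Q1 Q2 : finType) (i1 : Q1) (d1 : Q1 -> S -> Q1) (F1 : pred Q1)
  (i2 : Q2) (d2 : Q2 -> gamma -> Q2) (F2 : pred Q2) A z :
  @derives S (mkG i1 d1 F1 i2 d2 F2) A z ->
  match A with
  | None => exists x : Q1 * Q2, F1 x.1 && F2 x.2 /\
       exists rw rv, sfold d1 i1 rw = x.1 /\ sfold d2 i2 rv = x.2 /\ hfold_rev rw rv = Some z
  | Some x => exists rw rv, sfold d1 i1 rw = x.1 /\ sfold d2 i2 rv = x.2 /\ hfold_rev rw rv = Some z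
  end.
Proof.
elim=> {A z} [A u|A u B v w].
- move/in_grules; case=> [[-> ->]|[[x [_ E]]|[p [q [a [E|E]]]]]]; try discriminate E.
  by exists [::], [::].
- move/in_grules; case=> [E|[[x [Hx [-> -> -> ->]]]|[p [q [a [[-> -> -> ->]|[-> -> -> ->]]]]]]].
  + discriminate E.
  + move=> _ IH; exists x; split=> //; by rewrite /= cats0.
  + move=> _ [rw [rv [E1 [E2 E]]]]; exists (a :: rw), (gu :: rv).
    by rewrite !sfold_cons E1 E2 /= E cats0.
  + move=> _ [rw [rv [E1 [E2 E]]]]; exists (a :: rw), (gd :: rv).
    by rewrite !sfold_cons E1 E2 /= E cats1.
Qed.

Lemma der_complete (S Q1 Q2 : finType) (i1 : Q1) (d1 : Q1 -> S -> Q1) (F1 : pred Q1)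
  (i2 : Q2) (d2 : Q2 -> gamma -> Q2) (F2 : pred Q2) rw rv z :
  hfold_rev rw rv = Some z ->
  @derives S (mkG i1 d1 F1 i2 d2 F2) (Some (sfold d1 i1 rw, sfold d2 i2 rv)) z.
Proof.
elim: rw rv z => [|a rw IH] [|b rv] z //=.
- case=> <-; apply: der_term; apply/in_grules; by left.
- case E: (hfold_rev rw rv) => [x|] // [<-].
  rewrite !sfold_cons; case: b => /=.
  + have := @der_nonterm S (mkG i1 d1 F1 i2 d2 F2) _ [:: a] (Some (sfold d1 i1 rw, sfold d2 i2 rv)) [::] _ _ (IH _ _ E).
    rewrite cats0; apply; apply/in_grules; right; right.
    by exists (sfold d1 i1 rw), (sfold d2 i2 rv), a; left.
  + have := @der_nonterm S (mkG i1 d1 F1 i2 d2 F2) _ [::] (Some (sfold d1 i1 rw, sfold d2 i2 rv)) [:: a] _ _ (IH _ _ E).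
    rewrite cats1; apply; apply/in_grules; right; right.
    by exists (sfold d1 i1 rw), (sfold d2 i2 rv), a; right.
Qed.

Theorem theorem1 (Sigma : finType) (L1 : language Sigma) (L2 : language gamma) :
  regular L1 -> regular L2 -> linear (F_lang L1 L2).
Proof.
move=> [Q1 [i1 [d1 [F1 H1]]]] [Q2 [i2 [d2 [F2 H2]]]].
exists (mkG i1 d1 F1 i2 d2 F2) => z; rewrite /lin_lang /F_lang; split.
- move=> [w [v [Hw [Hv [_ Hh]]]]].
  have := der_complete i1 d1 F1 i2 d2 F2 Hh.
  have := @der_nonterm _ (mkG i1 d1 F1 i2 d2 F2) None [::]
     (Some (sfold d1 i1 (rev w), sfold d2 i2 (rev v))) [::] z.
  rewrite /= cats0; apply; apply/in_grules; right; left.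
  exists (sfold d1 i1 (rev w), sfold d2 i2 (rev v)); split=> //.
  by rewrite /sfold !revK /=; apply/andP; split; [apply/H1|apply/H2].
- move/der_sound=> /= [x [/andP [Fx1 Fx2] [rw [rv [E1 [E2 E]]]]]].
  exists (rev rw), (rev rv); split; first by apply/H1; rewrite -/(sfold d1 i1 rw) E1.
  split; first by apply/H2; rewrite -/(sfold d2 i2 rv) E2.
  by rewrite !size_rev (size_hfold E) /hfold !revK.
Qed.
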